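(* Let $p$ be a prime and let $f:\mathbb{Z}_p\times\mathbb{Z}_p\to\mathbb{Z}_p$ be additively inseparable. Write $f(x,y)=\sum_{i,j=0}^{p-1}\lambda_{i,j}x^iy^j$ with $\lambda_{i,j}\in\mathbb{Z}_p$. Then $\Delta(f)\ge 2$. Moreover, $2^{\Delta(f)-2}$ copies of $P^f$, together with local processing and without communication, suffice to simulate one copy of $PR_p$ exactly.
   Context: Let $p$ be a prime. All arithmetic on elements of $\mathbb{Z}_p$ is modulo $p$. A box is a conditional probability distribution $P(a,b\mid x,y)$ with $a,b,x,y\in\mathbb{Z}_p$. It is shared by Alice, who supplies $x$ and receives $a$, and Bob, who supplies $y$ and receives $b$. Different copies act independently. $PR_p(a,b\mid x,y)=1/p$ if $a-b=xy$, and $0$ otherwise. For $f:\mathbb{Z}_p\times\mathbb{Z}_p\to\mathbb{Z}_p$, the functional box is $P^f(a,b\mid x,y)=1/p$ if $a-b=f(x,y)$, and $0$ otherwise. A function $f$ is additively separable if $f(x,y)=g(x)+h(y)$ for some $g,h:\mathbb{Z}_p\to\mathbb{Z}_p$. Otherwise it is additively inseparable. Every $f$ has a unique representation $f(x,y)=\sum_{i,j=0}^{p-1}\lambda_{i,j}x^iy^j$. Define $$\Delta(f)=\max_{1\le i,j\le p-1}\mathbb{I}_{\lambda_{i,j}\neq0}\,(i+j),$$ the maximal total degree of a monomial with nonzero coefficient that is divisible by $xy$. It is $0$ if there is no such monomial. *)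

(* Defs.v *)
(* Z_p is modelled as 'F_p (p prime); probabilities are rationals. *)
From HB Require Import structures.
From mathcomp Require Import all_boot all_order all_algebra.
Set Implicit Arguments. Unset Strict Implicit. Unset Printing Implicit Defensive.
Import Order.TTheory GRing.Theory Num.Theory.
Local Open Scope ring_scope.

(* A box P a b x y = P(a,b | x,y). *)
Definition box (p : nat) := 'F_p -> 'F_p -> 'F_p -> 'F_p -> rat.

Definition PRbox (p : nat) : box p :=
  fun a b x y => if a - b == x * y then (p%:R)^-1 else 0.

Arguments PRbox : clear implicits.

Definition funbox (p : nat) (f : 'F_p -> 'F_p -> 'F_p) : box p :=
  fun a b x y => if a - b == f x y then (p%:R)^-1 else 0.

Definition add_separable (p : nat) (f : 'F_p -> 'F_p -> 'F_p) : Prop :=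
  exists g h : 'F_p -> 'F_p, forall x y, f x y = g x + h y.

Definition poly_rep (p : nat) (f : 'F_p -> 'F_p -> 'F_p)
  (lam : 'I_p -> 'I_p -> 'F_p) : Prop :=
  forall x y, f x y = \sum_(i < p) \sum_(j < p) lam i j * x ^+ i * y ^+ j.

(* Delta: maximal i+j over 1 <= i,j <= p-1 with lam_{i,j} <> 0 (0 if none). *)
Definition Delta (p : nat) (lam : 'I_p -> 'I_p -> 'F_p) : nat :=
  (\max_(i < p) \max_(j < p | (0 < i)%N && (0 < j)%N && (lam i j != 0%R)) (i + j))%N.

(* A local strategy for box inputs: the input to box k may only depend on
   the outputs of boxes j < k (causality). *)
Definition causal (F : Type) (n : nat) (s : 'I_n -> {ffun 'I_n -> F} -> F) : Prop :=
  forall (k : 'I_n) (u v : {ffun 'I_n -> F}),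
    (forall j : 'I_n, (j < k)%N -> u j = v j) -> s k u = s k v.

(* Probability that the local wiring (shared randomness (T,w), Alice's input
   maps xin / output map outA, Bob's yin / outB) applied to n copies of P
   yields outputs (a,b) on inputs (x,y). Boxes are used in order 0..n-1. *)
Definition wiring_prob (p n : nat) (P : box p) (T : finType) (w : T -> rat)
  (xin : T -> 'F_p -> 'I_n -> {ffun 'I_n -> 'F_p} -> 'F_p)
  (yin : T -> 'F_p -> 'I_n -> {ffun 'I_n -> 'F_p} -> 'F_p)
  (outA : T -> 'F_p -> {ffun 'I_n -> 'F_p} -> 'F_p)
  (outB : T -> 'F_p -> {ffun 'I_n -> 'F_p} -> 'F_p)
  (a b x y : 'F_p) : rat :=
  \sum_(l : T) w l *
    \sum_(av : {ffun 'I_n -> 'F_p}) \sum_(bv : {ffun 'I_n -> 'F_p})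
      (if (outA l x av == a) && (outB l y bv == b)
       then \prod_(k < n) P (av k) (bv k) (xin l x k av) (yin l y k bv)
       else 0).

Definition simulates (p n : nat) (P Q : box p) : Prop :=
  exists (T : finType) (w : T -> rat)
    (xin : T -> 'F_p -> 'I_n -> {ffun 'I_n -> 'F_p} -> 'F_p)
    (yin : T -> 'F_p -> 'I_n -> {ffun 'I_n -> 'F_p} -> 'F_p)
    (outA : T -> 'F_p -> {ffun 'I_n -> 'F_p} -> 'F_p)
    (outB : T -> 'F_p -> {ffun 'I_n -> 'F_p} -> 'F_p),
    [/\ (forall l, 0 <= w l), \sum_(l : T) w l = 1,
        (forall l x, causal (xin l x)),
        (forall l y, causal (yin l y)) &
        (forall a b x y, wiring_prob P w xin yin outA outB a b x y = Q a b x y)].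

(* Main.v *)
Require Import Defs.
From HB Require Import structures.
From mathcomp Require Import all_boot all_order all_algebra.
From mathcomp Require Import ring zify.
Import Order.TTheory GRing.Theory Num.Theory.
Set Implicit Arguments. Unset Strict Implicit. Unset Printing Implicit Defensive.
Local Open Scope ring_scope.

Definition mixnz (p : nat) (lam : 'I_p -> 'I_p -> 'F_p) (i j : 'I_p) : bool :=
  [&& (0 < i)%N, (0 < j)%N & lam i j != 0].

Lemma Delta_ge p (lam : 'I_p -> 'I_p -> 'F_p) i j :
  mixnz lam i j -> (i + j <= Delta lam)%N.
Proof.
move=> h; rewrite /Delta.
apply: (leq_trans _ (leq_bigmax_cond (F := fun i : 'I_p =>
   (\max_(j < p | (0 < i)%N && (0 < j)%N && (lam i j != 0%R)) (i + j))%N) i isT)).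
apply: (leq_bigmax_cond (F := fun j : 'I_p => (i + j)%N)).
by move: h; rewrite /mixnz => /and3P[-> -> ->].
Qed.

Lemma Delta_le p (lam : 'I_p -> 'I_p -> 'F_p) d :
  (forall i j, mixnz lam i j -> (i + j <= d)%N) -> (Delta lam <= d)%N.
Proof.
move=> h; rewrite /Delta; apply/bigmax_leqP => i _; apply/bigmax_leqP => j hj.
by apply: h; move: hj; rewrite /mixnz => /andP[/andP[-> ->] ->].
Qed.

Lemma Delta_wit p (lam : 'I_p -> 'I_p -> 'F_p) :
  (0 < Delta lam)%N -> exists i j, mixnz lam i j /\ (i + j)%N = Delta lam.
Proof.
move=> h.
case: (boolP [exists i, exists j, mixnz lam i j && ((i + j)%N == Delta lam)]).
  by move=> /existsP[i /existsP[j /andP[h1 /eqP h2]]]; exists i, j.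
move=> /existsPn hn.
have : (Delta lam <= (Delta lam).-1)%N.
  apply: Delta_le => i j hij.
  have := hn i => /existsPn /(_ j); rewrite hij /= => hne.
  have := Delta_ge hij; rewrite leq_eqVlt (negbTE hne) /=.
  by case: (Delta lam) {h hn hne}.
by case: (Delta lam) h => // n _; rewrite ltnn.
Qed.

Lemma mixed_formula p (f : 'F_p -> 'F_p -> 'F_p) lam : poly_rep f lam ->
  forall x y, f x y - f x 0 - f 0 y + f 0 0 =
    \sum_(i < p) \sum_(j < p) (if mixnz lam i j then lam i j * x ^+ i * y ^+ j else 0).
Proof.
move=> h x y; rewrite !h.
rewrite -!sumrB -big_split; apply: eq_bigr => i _.
rewrite -!sumrB -big_split; apply: eq_bigr => j _.
rewrite /mixnz; case: i => -[|i] hi /=.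
  by rewrite !expr0 !mulr1; ring.
case: j => -[|j] hj /=.
  by rewrite !expr0 !mulr1; ring.
case: eqP => [->|_] /=; first by rewrite !mul0r !subrr addr0.
by rewrite !expr0n /= !mulr0 !mul0r !subr0 addr0.
Qed.
Lemma sep_of_nomix p (f : 'F_p -> 'F_p -> 'F_p) lam : poly_rep f lam ->
  (forall i j, ~~ mixnz lam i j) -> add_separable f.
Proof.
move=> h hn; exists (fun x => f x 0), (fun y => f 0 y - f 0 0) => x y.
have := mixed_formula h x y.
rewrite big1 => [|i _]; last by rewrite big1 // => j _; rewrite (negbTE (hn i j)).
move=> e; have -> : f x y = (f x y - f x 0 - f 0 y + f 0 0) + f x 0 + f 0 y - f 0 0 by ring.
by rewrite e; ring.
Qed.

Lemma base_mix p (f : 'F_p -> 'F_p -> 'F_p) lam : poly_rep f lam -> Delta lam = 2%N ->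
  exists lm, lm != 0 /\ forall x y, f x y - f x 0 - f 0 y + f 0 0 = lm * x * y.
Proof.
move=> h hD.
have [i [j [hij hs]]] := Delta_wit (ltac:(by rewrite hD) : (0 < Delta lam)%N).
have hm := hij; move: hm; rewrite /mixnz => /and3P[hi hj hl].
rewrite hD in hs.
have ei : (i : nat) = 1%N by lia.
have ej : (j : nat) = 1%N by lia.
exists (lam i j); split => // x y.
rewrite (mixed_formula h) (bigD1 i) //= (bigD1 j) //= hij big1 ?addr0 => [|k hk]; last first.
  case: ifP => // hm; have := Delta_ge hm; rewrite hD.
  have := hm; rewrite /mixnz => /and3P[hk1 hk2 _].
  move: hk; rewrite -(inj_eq val_inj) /= ej => hk; lia.
rewrite big1 ?addr0 => [|k hk]; first by rewrite ei ej !expr1.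
apply: big1 => l _; case: ifP => // hm; have := Delta_ge hm; rewrite hD.
have := hm; rewrite /mixnz => /and3P[hk1 hk2 _].
move: hk; rewrite -(inj_eq val_inj) /= ei => hk; lia.
Qed.

Lemma polyrep_T p (f : 'F_p -> 'F_p -> 'F_p) lam : poly_rep f lam ->
  poly_rep (fun x y => f y x) (fun i j => lam j i).
Proof.
move=> h x y; rewrite h exchange_big /=; apply: eq_bigr => i _; apply: eq_bigr => j _.
by rewrite mulrAC.
Qed.

Lemma Delta_T p (lam : 'I_p -> 'I_p -> 'F_p) : Delta (fun i j => lam j i) = Delta lam.
Proof.
apply/eqP; rewrite eqn_leq; apply/andP; split; apply: Delta_le => i j.
  by rewrite /mixnz => /and3P[h1 h2 h3]; rewrite addnC; apply: Delta_ge; rewrite /mixnz h1 h2 h3.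
by rewrite /mixnz => /and3P[h1 h2 h3]; rewrite addnC; apply: (Delta_ge (lam := fun i j => lam j i)); rewrite /mixnz h1 h2 h3.
Qed.

Definition cc p (i k : 'I_p) : 'F_p := if (k < i)%N then ('C(i, k))%:R else 0.

Lemma diff_pow p (i : 'I_p) (x : 'F_p) :
  (x + 1) ^+ i - x ^+ i = \sum_(k < p) cc i k * x ^+ k.
Proof.
rewrite exprD1n (big_ord_widen _ (fun k => x ^+ k *+ 'C(i, k)) (ltn_ord i)) big_mkcond /=.
rewrite (bigD1 i) //= [RHS](bigD1 i) //= leqnn binn mulr1n /cc ltnn mul0r add0r.
rewrite addrAC subrr add0r; apply: eq_bigr => k hk; rewrite ltnS leq_eqVlt.
have hk' : (k == i :> nat) = false by apply/negbTE; rewrite (inj_eq val_inj).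
rewrite hk' /=; case: ifP => _; by rewrite ?mulr_natl ?mul0r.
Qed.

Definition lamD p (lam : 'I_p -> 'I_p -> 'F_p) (k j : 'I_p) : 'F_p :=
  \sum_(i < p) lam i j * cc i k.

Lemma polyrep_D p (f : 'F_p -> 'F_p -> 'F_p) lam : poly_rep f lam ->
  poly_rep (fun x y => f (x + 1) y - f x y) (lamD lam).
Proof.
move=> h x y; rewrite !h -sumrB.
transitivity (\sum_(i < p) \sum_(j < p) \sum_(k < p) lam i j * cc i k * x ^+ k * y ^+ j).
  apply: eq_bigr => i _; rewrite -sumrB; apply: eq_bigr => j _.
  rewrite -mulrBl -mulrBr diff_pow mulr_sumr mulr_suml; apply: eq_bigr => k _.
  by rewrite !mulrA.
under eq_bigr do rewrite exchange_big /=.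
rewrite exchange_big /=; apply: eq_bigr => k _.
rewrite exchange_big /=; apply: eq_bigr => j _.
rewrite /lamD !mulr_suml; apply: eq_bigr => i _; by [].
Qed.

Lemma Delta_D p (hp : prime p) (lam : 'I_p -> 'I_p -> 'F_p) (i0 j0 : 'I_p) :
  mixnz lam i0 j0 -> (1 < i0)%N -> (i0 + j0)%N = Delta lam ->
  Delta (lamD lam) = (Delta lam).-1.
Proof.
move=> hm hi0 hs; have := hm; rewrite /mixnz => /and3P[_ hj0 hl0].
apply/eqP; rewrite eqn_leq; apply/andP; split.
  apply: Delta_le => k j; rewrite /mixnz => /and3P[hk hj hl].
  have [i hi] : exists i, lam i j * cc i k != 0.
    apply/existsP; apply: contraR hl => /existsPn hn.
    by rewrite /lamD big1 // => i _; apply/eqP; have := hn i; rewrite negbK.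
  move: hi; rewrite /cc; case: ifP => hki; last by rewrite mulr0 eqxx.
  rewrite mulf_eq0 negb_or => /andP[hli _].
  have : mixnz lam i j by rewrite /mixnz hj hli (leq_ltn_trans _ hki).
  move=> /Delta_ge; lia.
have hk0 : (i0.-1 < p)%N by rewrite (leq_ltn_trans (leq_pred _) (ltn_ord i0)).
set k0 := Ordinal hk0.
have -> : (Delta lam).-1 = (k0 + j0)%N by rewrite /= -hs; lia.
apply: Delta_ge; rewrite /mixnz /= hj0; apply/andP; split; first lia.
rewrite /lamD (bigD1 i0) //= big1 ?addr0 => [|i hi].
  rewrite mulf_neq0 // /cc /=.
  have -> : (i0.-1 < i0)%N by lia.
  have -> : 'C(i0, i0.-1) = i0 by case: (nat_of_ord i0) hi0 => // n _; rewrite /= binSn.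
  rewrite -(dvdn_pcharf (pchar_Fp hp)) gtnNdvd //; lia.
rewrite /cc /=; case: ifP => hki; last by rewrite mulr0.
have hi' : (i0 < i)%N.
  rewrite ltn_neqAle (_ : (i0 : nat) != i) ?andTb; first by lia.
  by rewrite (inj_eq val_inj) eq_sym.
case: (eqVneq (lam i j0) 0) => [->|hl]; first by rewrite mul0r.
have : mixnz lam i j0 by rewrite /mixnz hj0 hl andbT; lia.
move=> /Delta_ge; lia.
Qed.

Definition good p (f : 'F_p -> 'F_p -> 'F_p) (n : nat) : Prop :=
 exists s : seq (('F_p -> 'F_p) * ('F_p -> 'F_p) * 'F_p),
  [/\ size s = n, all (fun t => t.2 != 0) s &
  exists lm (G H : 'F_p -> 'F_p), lm != 0 /\ forall x y,
   \sum_(t <- s) t.2 * f (t.1.1 x) (t.1.2 y) = lm * x * y + G x + H y].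

Lemma good_base p (f : 'F_p -> 'F_p -> 'F_p) lam : poly_rep f lam -> Delta lam = 2%N ->
  good f 1.
Proof.
move=> h hD; have [lm [hlm he]] := base_mix h hD.
exists [:: (id, id, 1)]; split => //=.
exists lm, (fun x => f x 0), (fun y => f 0 y - f 0 0); split => // x y.
rewrite big_seq1 /= mul1r -he; ring.
Qed.

Lemma good_double p (f : 'F_p -> 'F_p -> 'F_p) n :
  good (fun x y => f (x + 1) y - f x y) n -> good f (n + n).
Proof.
move=> [s [hs ha [lm [G [H [hlm he]]]]]].
exists ([seq ((fun x => t.1.1 x + 1), t.1.2, t.2) | t <- s] ++ [seq (t.1.1, t.1.2, - t.2) | t <- s]).
split.
- by rewrite size_cat !size_map hs.
- rewrite all_cat !all_map; apply/andP; split; apply: sub_all ha => t /=.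
    by [].
  by rewrite oppr_eq0.
exists lm, G, H; split => // x y; rewrite -he big_cat !big_map /= -big_split.
by apply: eq_bigr => t _; rewrite /= mulNr mulrBr.
Qed.

Lemma good_T p (f : 'F_p -> 'F_p -> 'F_p) n :
  good (fun x y => f y x) n -> good f n.
Proof.
move=> [s [hs ha [lm [G [H [hlm he]]]]]].
exists [seq (t.1.2, t.1.1, t.2) | t <- s]; split.
- by rewrite size_map.
- by rewrite all_map.
exists lm, H, G; split => // x y; rewrite big_map /= he; ring.
Qed.

Lemma good_all p (hp : prime p) m : forall (f : 'F_p -> 'F_p -> 'F_p) lam,
  poly_rep f lam -> Delta lam = m.+2 -> good f (2 ^ m).
Proof.
elim: m => [|m IH] f lam h hD; first exact: good_base h hD.
have [i0 [j0 [hm hs]]] := Delta_wit (ltac:(by rewrite hD) : (0 < Delta lam)%N).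
have := hm; rewrite /mixnz => /and3P[hi0 hj0 hl0].
rewrite expnS mul2n -addnn.
case: (ltnP 1 i0) => hi1.
  apply: good_double; apply: (IH _ (lamD lam)); first exact: polyrep_D.
  by rewrite (Delta_D hp hm hi1 hs) hD.
apply: good_T; apply: good_double.
apply: (IH _ (lamD (fun i j => lam j i))); first exact: polyrep_D (polyrep_T h).
have hmT : mixnz (fun i j => lam j i) j0 i0 by rewrite /mixnz hi0 hj0 hl0.
have hj1 : (1 < j0)%N by move: hs; rewrite hD; lia.
rewrite (Delta_D hp hmT hj1); first by rewrite Delta_T hD.
by rewrite Delta_T addnC.
Qed.
Lemma prod_box p n (f : 'F_p -> 'F_p -> 'F_p) (al be : 'I_n -> 'F_p -> 'F_p) x y
  (av bv : {ffun 'I_n -> 'F_p}) :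
  \prod_(k < n) funbox f (av k) (bv k) (al k x) (be k y) =
  if bv == [ffun k => av k - f (al k x) (be k y)] then ((p%:R : rat)^-1) ^+ n else 0.
Proof.
case: eqP => [->|hne].
  rewrite (eq_bigr (fun _ => (p%:R : rat)^-1)) ?prodr_const ?card_ord // => k _.
  by rewrite /funbox ffunE opprB addrC subrK eqxx.
have [k hk] : exists k, bv k != av k - f (al k x) (be k y).
  apply/existsP; rewrite -negb_forall; apply/negP => /forallP hall; apply: hne.
  by apply/ffunP => k; rewrite ffunE; apply/eqP/hall.
rewrite (bigD1 k) //= /funbox ifF ?mul0r //; apply: contraNF hk => /eqP <-.
by rewrite opprB addrC subrK.
Qed.

Lemma fiber_count p (hp : prime p) n (L : {ffun 'I_n -> 'F_p} -> 'F_p)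
  (hL : forall d, exists h, injective h /\ forall av, L (h av) = L av + d) t :
  (p%:R : rat) * \sum_(av : {ffun 'I_n -> 'F_p}) (if L av == t then 1 else 0) = (p ^ n)%:R.
Proof.
have hC : forall t', \sum_(av : {ffun 'I_n -> 'F_p}) (if L av == t' then 1 else 0)
   = \sum_(av : {ffun 'I_n -> 'F_p}) (if L av == t then 1 else 0) :> rat.
  move=> t'; have [h [hi hh]] := hL (t' - t).
  rewrite (reindex_inj hi) /=; apply: eq_bigr => av _.
  rewrite hh; have -> : (L av + (t' - t) == t') = (L av == t) by
    apply/eqP/eqP => [e|->]; [rewrite -(addrK (t' - t) (L av)) e; ring | ring].
  by [].
transitivity (\sum_(t' : 'F_p) \sum_(av : {ffun 'I_n -> 'F_p}) (if L av == t' then 1 else 0) : rat).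
  by rewrite (eq_bigr _ (fun t' _ => hC t')) sumr_const card_Fp // mulr_natl.
rewrite exchange_big /= (eq_bigr (fun _ => 1)) => [|av _].
  by rewrite sumr_const card_ffun card_Fp // card_ord.
rewrite (bigD1 (L av)) //= eqxx big1 ?addr0 // => t' ht'.
by rewrite eq_sym (negbTE ht').
Qed.

Lemma sum_unit (F : unit -> rat) : \sum_(l : unit) F l = F tt.
Proof. by rewrite (big_pred1 tt) //; case. Qed.

Lemma lin_sim p (hp : prime p) n (f : 'F_p -> 'F_p -> 'F_p) (al be : 'I_n -> 'F_p -> 'F_p)
  (e : 'I_n -> 'F_p) (k0 : 'I_n) (hk0 : e k0 != 0) (lm : 'F_p) (hlm : lm != 0)
  (G H : 'F_p -> 'F_p)
  (hrel : forall x y, \sum_(k < n) e k * f (al k x) (be k y) = lm * x * y + G x + H y) :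
  simulates n (funbox f) (PRbox p).
Proof.
pose outA := fun (_ : unit) x (av : {ffun 'I_n -> 'F_p}) => lm^-1 * (\sum_(k < n) e k * av k - G x).
pose outB := fun (_ : unit) y (bv : {ffun 'I_n -> 'F_p}) => lm^-1 * (\sum_(k < n) e k * bv k + H y).
exists unit, (fun _ => 1), (fun _ x k _ => al k x), (fun _ y k _ => be k y), outA, outB.
split => //.
- by rewrite sum_unit.
move=> a b x y; rewrite /wiring_prob sum_unit mul1r.
set q := ((p%:R : rat)^-1).
pose wv := fun av : {ffun 'I_n -> 'F_p} => [ffun k => av k - f (al k x) (be k y)].
have hB : forall av, outB tt y (wv av) = outA tt x av - x * y.
  move=> av; rewrite /outB /outA.
  have -> : \sum_(k < n) e k * wv av k = \sum_(k < n) e k * av k - (lm * x * y + G x + H y).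
    by rewrite -hrel -sumrB; apply: eq_bigr => k _; rewrite ffunE mulrBr.
  by field.
transitivity (\sum_(av : {ffun 'I_n -> 'F_p})
    (if (outA tt x av == a) && (a - x * y == b) then q ^+ n else 0)).
  apply: eq_bigr => av _.
  under eq_bigr do rewrite prod_box.
  rewrite (bigD1 (wv av)) //= eqxx big1 ?addr0 => [|bv hbv]; last first.
    by rewrite (negbTE hbv) if_same.
  rewrite hB; case: (eqVneq (outA tt x av) a) => [->|] //=.
rewrite /PRbox; case: (eqVneq (a - b) (x * y)) => hab; last first.
  rewrite big1 // => av _; case: eqP => //= _; case: eqP => // hb.
  by case/eqP: hab; rewrite -hb; ring.
have -> : a - x * y == b by rewrite -hab; apply/eqP; ring.
under eq_bigr do rewrite andbT.
transitivity (q ^+ n * \sum_(av : {ffun 'I_n -> 'F_p}) (if outA tt x av == a then 1 else 0)).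
  by rewrite mulr_sumr; apply: eq_bigr => av _; case: ifP; rewrite ?mulr1 ?mulr0.
have hL : forall d, exists h, injective h /\ forall av, outA tt x (h av) = outA tt x av + d.
  move=> d; pose c := lm * d / e k0.
  exists (fun av : {ffun 'I_n -> 'F_p} => [ffun k => av k + (if k == k0 then c else 0)]); split.
    move=> u v huv; apply/ffunP => k; have := congr1 (fun w : {ffun 'I_n -> 'F_p} => w k) huv.
    by rewrite /= !ffunE => /addIr.
  move=> av; rewrite /outA.
  have -> : \sum_(k < n) e k * [ffun k => av k + (if k == k0 then c else 0)] k =
     \sum_(k < n) e k * av k + e k0 * c.
    under eq_bigr do rewrite ffunE mulrDr.
    rewrite big_split /=; congr (_ + _); rewrite (bigD1 k0) //= eqxx big1 ?addr0 // => k hk.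
    by rewrite (negbTE hk) mulr0.
  by rewrite /c; field; rewrite hk0 hlm.
have hc := fiber_count hp hL a.
have hp0 : (p%:R : rat) != 0 by rewrite pnatr_eq0 -lt0n prime_gt0.
have eC : \sum_(av : {ffun 'I_n -> 'F_p}) (if outA tt x av == a then 1 else 0) = (p%:R)^+n / p%:R :> rat.
  by rewrite -natrX -hc mulrAC divff // mul1r.
by rewrite eC /q mulrA -exprMn mulVf // expr1n div1r.
Qed.

Lemma good_sim p (hp : prime p) (f : 'F_p -> 'F_p -> 'F_p) n :
  good f n -> (0 < n)%N -> simulates n (funbox f) (PRbox p).
Proof.
move=> [s [hs ha [lm [G [H [hlm he]]]]]] hn.
pose t0 : ('F_p -> 'F_p) * ('F_p -> 'F_p) * 'F_p := (id, id, 0).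
apply: (@lin_sim p hp n f (fun k => (nth t0 s k).1.1) (fun k => (nth t0 s k).1.2)
  (fun k => (nth t0 s k).2) (Ordinal hn) _ lm hlm G H).
  by have := (elimT (all_nthP t0) ha) 0 (ltac:(by rewrite hs) : (0 < size s)%N).
by move=> x y; rewrite -he (big_nth t0) hs big_mkord.
Qed.

Theorem mainTheorem3 (p : nat) (hp : prime p) (f : 'F_p -> 'F_p -> 'F_p)
  (hf : ~ add_separable f) (lam : 'I_p -> 'I_p -> 'F_p) (hlam : poly_rep f lam) :
  (2 <= Delta lam)%N /\ simulates (2 ^ (Delta lam - 2))%N (funbox f) (PRbox p).
Proof.
have h2 : (2 <= Delta lam)%N.
  case: (leqP 2 (Delta lam)) => // hlt; exfalso; apply: hf.
  apply: (sep_of_nomix hlam) => i j; apply/negP => hm; have := Delta_ge hm.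
  by move: hm; rewrite /mixnz => /and3P[h1 h2 _]; lia.
split => //.
have hD : Delta lam = (Delta lam - 2).+2 by lia.
apply: good_sim => //; last by rewrite expn_gt0.
exact: (good_all hp hlam hD).
Qed.
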